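(* Let $y\in\mathbb R^n$, let $X\in\mathbb R^{n\times p}$ have nonzero columns $x_1,\dots,x_p$, and let $\sigma^2>0$ be fixed. Then the maximization problem $\operatorname{Argmax}_{\gamma\in[0,\infty)^p}\ell(\sigma^2,\gamma)$ has at least one solution $\hat\gamma=(\hat\gamma_1,\ldots,\hat\gamma_p)$, and it can be chosen with the following property: for every $j\in\{1,\dots,p\}$, \[ \hat\gamma_{j}=\begin{cases}\dfrac{\left(x_j'C_j^{-1}y\right)^2-x_j'C_j^{-1}x_j}{\left(x_j'C_j^{-1}x_j\right)^2} & \text{if } \left(x_j'C_j^{-1}y\right)^2> x_j'C_j^{-1}x_j,\\[2mm] 0 &\text{otherwise},\end{cases} \] where \[C_j= \sigma^2 I_n +\sum_{k\in I_{\hat\gamma}\setminus\{j\}}\hat\gamma_{k}x_kx_k',\qquad I_{\hat\gamma}=\{k:\hat\gamma_k\neq 0\}.\]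
   Context: No probabilistic assumptions are made here: $y$ and $X$ are fixed. For $\gamma\in\Theta=[0,\infty)^p$ let $I_\gamma=\{1\le j\le p:\gamma_j\neq 0\}$ and $C_\gamma=\sigma^2 I_n+\sum_{j\in I_\gamma}\gamma_j x_jx_j'$, where $I_n$ is the $n\times n$ identity. The (marginal, type-II) log-likelihood is $\ell(\sigma^2,\gamma)=-\tfrac12\log\det(C_\gamma)-\tfrac12\operatorname{Tr}(C_\gamma^{-1}yy')$. It is the log-likelihood of $y\sim N(0,C_\gamma)$, arising from the model $y\sim N(X\beta,\sigma^2 I_n)$ with independent priors $\beta_j\sim N(0,\gamma_j)$, where $N(0,0)$ denotes the point mass at $0$. *)

(* Defs.v *)
From HB Require Import structures.
From Stdlib Require Import Reals Lra ClassicalEpsilon FunctionalExtensionality.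
From mathcomp Require Import all_boot all_order all_algebra.

Set Implicit Arguments.
Unset Strict Implicit.
Unset Printing Implicit Defensive.

Import GRing.Theory.

Local Open Scope R_scope.

Definition R_eqb (x y : R) : bool := if Req_EM_T x y then true else false.

Lemma R_eqP : Equality.axiom R_eqb.
Proof. by move=> x y; rewrite /R_eqb; case: Req_EM_T => h; constructor. Qed.

HB.instance Definition _ := hasDecEq.Build R R_eqP.

Definition R_find (P : pred R) (n : nat) : option R :=
  match excluded_middle_informative (exists x, P x) with
  | left h => Some (proj1_sig (constructive_indefinite_description _ h))
  | right _ => None
  end.

Lemma R_find_correct P n x : R_find P n = Some x -> P x.
Proof.
rewrite /R_find; case: excluded_middle_informative => // h [<-].
exact: proj2_sig (constructive_indefinite_description _ h).
Qed.

Lemma R_find_complete (P : pred R) : (exists x, P x) -> exists n, R_find P n.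
Proof. by move=> h; exists 0%N; rewrite /R_find; case: excluded_middle_informative. Qed.

Lemma R_find_ext (P Q : pred R) : P =1 Q -> R_find P =1 R_find Q.
Proof. by move=> /functional_extensionality ->. Qed.

HB.instance Definition _ :=
  hasChoice.Build R R_find_correct R_find_complete R_find_ext.

Lemma R_addA : associative Rplus. Proof. by move=> *; rewrite Rplus_assoc. Qed.
Lemma R_addC : commutative Rplus. Proof. by move=> *; rewrite Rplus_comm. Qed.
Lemma R_add0 : left_id (0:R) Rplus. Proof. by move=> *; rewrite Rplus_0_l. Qed.
Lemma R_addN : left_inverse (0:R) Ropp Rplus. Proof. by move=> *; rewrite Rplus_opp_l. Qed.

HB.instance Definition _ := GRing.isZmodule.Build R R_addA R_addC R_add0 R_addN.

Lemma R_mulA : associative Rmult. Proof. by move=> *; rewrite Rmult_assoc. Qed.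
Lemma R_mulC : commutative Rmult. Proof. by move=> *; rewrite Rmult_comm. Qed.
Lemma R_mul1 : left_id (1:R) Rmult. Proof. by move=> *; rewrite Rmult_1_l. Qed.
Lemma R_mulDl : left_distributive Rmult Rplus.
Proof. by move=> *; rewrite Rmult_plus_distr_r. Qed.
Lemma R_one_neq0 : ((1:R) : R) != (0:R).
Proof. by apply/eqP; exact: R1_neq_R0. Qed.

HB.instance Definition _ :=
  GRing.Zmodule_isComNzRing.Build R R_mulA R_mulC R_mul1 R_mulDl R_one_neq0.

Definition R_inv (x : R) : R := if Req_EM_T x 0 then (0:R) else Rinv x.

Lemma R_mulVf (x : R) : x != 0 -> R_inv x * x = 1.
Proof.
move=> hx; unfold R_inv; destruct (Req_EM_T x 0) as [h|h].
  by rewrite h eqxx in hx.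
exact: Rinv_l.
Qed.

Lemma R_inv0 : R_inv 0 = 0.
Proof. unfold R_inv; destruct (Req_EM_T 0 0); [reflexivity|contradiction]. Qed.

HB.instance Definition _ := GRing.ComNzRing_isField.Build R R_mulVf R_inv0.

Local Close Scope R_scope.
Local Open Scope ring_scope.

Definition Cgamma (n p : nat) (s2 : R) (X : 'M[R]_(n, p)) (g : 'I_p -> R)
  : 'M[R]_n :=
  s2%:M + \sum_(j < p | g j != 0) g j *: (col j X *m (col j X)^T).

Definition Cminus (n p : nat) (s2 : R) (X : 'M[R]_(n, p)) (g : 'I_p -> R)
  (j : 'I_p) : 'M[R]_n :=
  s2%:M + \sum_(k < p | (g k != 0) && (k != j)) g k *: (col k X *m (col k X)^T).

Definition loglik (n p : nat) (y : 'cV[R]_n) (X : 'M[R]_(n, p)) (s2 : R)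
  (g : 'I_p -> R) : R :=
  - (1 / 2) * ln (\det (Cgamma s2 X g))
  - (1 / 2) * \tr (invmx (Cgamma s2 X g) *m (y *m y^T)).

Definition in_Theta (p : nat) (g : 'I_p -> R) : Prop :=
  forall j, Rle 0 (g j).

Definition is_argmax (n p : nat) (y : 'cV[R]_n) (X : 'M[R]_(n, p)) (s2 : R)
  (g : 'I_p -> R) : Prop :=
  in_Theta g /\ forall g', in_Theta g' -> Rle (loglik y X s2 g') (loglik y X s2 g).

Definition qy (n p : nat) (y : 'cV[R]_n) (X : 'M[R]_(n, p)) (s2 : R)
  (g : 'I_p -> R) (j : 'I_p) : R :=
  ((col j X)^T *m invmx (Cminus s2 X g j) *m y) 0 0.

Definition qx (n p : nat) (X : 'M[R]_(n, p)) (s2 : R)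
  (g : 'I_p -> R) (j : 'I_p) : R :=
  ((col j X)^T *m invmx (Cminus s2 X g j) *m col j X) 0 0.

(* Main.v *)
Require Import Defs.
From HB Require Import structures.
From Stdlib Require Import Reals Lra Classical FunctionalExtensionality.
From mathcomp Require Import all_boot all_order all_algebra.
Import GRing.Theory.
Section OneDim.
Local Open Scope R_scope.

Lemma ln_lt_sub1 z : 0 < z -> z <> 1 -> ln z < z - 1.
Proof.
move=> hz h1. have hl : ln z <> 0.
  move=> e. apply: h1. by rewrite -(exp_ln z hz) e exp_0.
have := exp_ineq1 _ hl. rewrite exp_ln //. lra.
Qed.

Lemma G_strict k u w : 0 < u -> 0 < w -> u <> w ->
  0 <= k -> (k = w \/ (k <= 1 /\ w = 1 /\ 1 <= u)) ->
  - ln u + k * (1 - / u) < - ln w + k * (1 - / w).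
Proof.
move=> hu hw huw hk [->|[hk1 [hw1 hu1]]].
- have hz : 0 < w / u by apply: Rdiv_lt_0_compat.
  have hne : w / u <> 1.
    move=> e; apply: huw. field_simplify_eq in e; lra.
  have := ln_lt_sub1 _ hz hne. rewrite /Rdiv ln_mult // ?ln_Rinv //; last by apply: Rinv_0_lt_compat.
  have -> : w * (1 - / w) = w - 1 by field; lra.
  have -> : w * (1 - / u) = w - w * / u by field; lra.
  lra.
- subst w; rewrite ln_1 Rinv_1.
  have hu' : 1 < u. { case: (Rle_lt_or_eq_dec _ _ hu1) => e //. exfalso. apply: huw. by rewrite e. }
  have hz : 0 < / u by apply: Rinv_0_lt_compat.
  have hne : / u <> 1. move=> e. have : u = 1 by rewrite -(Rinv_inv u) e Rinv_1. lra.
  have := ln_lt_sub1 _ hz hne. rewrite ln_Rinv // => h.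
  have h2 : / u < 1. rewrite -Rinv_1. apply: Rinv_lt_contravar; lra.
  have : k * (1 - / u) <= 1 - / u. 
    have := Rmult_le_compat_r (1 - / u) k 1 ltac:(lra) hk1. lra.
  lra.
Qed.

Lemma one_dim (h D a b c t0 : R) : 0 < h -> 0 < D -> 0 < a -> 0 <= t0 ->
  (forall t, 0 <= t ->
     - h * ln (D * (1 + t * a)) - h * (c - t * / (1 + t * a) * (b * b))
     <= - h * ln (D * (1 + t0 * a)) - h * (c - t0 * / (1 + t0 * a) * (b * b))) ->
  t0 = (if Rlt_dec a (b * b) then (b * b - a) / (a * a) else 0).
Proof.
move=> hh hD ha ht0 hmax.
set ts := (if Rlt_dec a (b * b) then (b * b - a) / (a * a) else 0).
have hts : 0 <= ts.
  rewrite /ts; case: Rlt_dec => hab /=; last lra. rewrite /Rdiv.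
  apply: Rmult_le_pos; first lra. left; apply: Rinv_0_lt_compat; nra.
have key : forall t, 0 <= t ->
   - h * ln (D * (1 + t * a)) - h * (c - t * / (1 + t * a) * (b * b)) =
   - h * ln D - h * c + h * (- ln (1 + t * a) + (b * b / a) * (1 - / (1 + t * a))).
  move=> t ht. have hu : 0 < 1 + t * a by nra.
  rewrite ln_mult //. field. lra.
have := hmax ts hts. rewrite !key // => hle.
case: (Req_dec t0 ts) => // hne.
have hu0 : 0 < 1 + t0 * a by nra.
have hus : 0 < 1 + ts * a by nra.
have hk : 0 <= b * b / a. apply: Rmult_le_pos; [nra|left; by apply: Rinv_0_lt_compat].
have hne' : 1 + t0 * a <> 1 + ts * a.
  move=> e; apply: hne. apply: (Rmult_eq_reg_r a); lra.
have := G_strict _ _ _ hu0 hus hne' hk.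
have hc : b * b / a = 1 + ts * a \/ b * b / a <= 1 /\ 1 + ts * a = 1 /\ 1 <= 1 + t0 * a.
  rewrite /ts; case: Rlt_dec => hab /=.
  - left. field. lra.
  - right. split; last split.
    + apply: (Rmult_le_reg_r a) => //. rewrite /Rdiv Rmult_assoc Rinv_l; lra.
    + lra.
    + nra.
move=> /(_ hc) hlt. nra.
Qed.
End OneDim.

From mathcomp Require Import ring.

Set Implicit Arguments.
Unset Strict Implicit.
Local Open Scope ring_scope.

Lemma addE (x y : R) : x + y = Rplus x y. Proof. by []. Qed.
Lemma mulE (x y : R) : x * y = Rmult x y. Proof. by []. Qed.
Lemma oppE (x : R) : - x = Ropp x. Proof. by []. Qed.
Lemma zeroE : (0 : R) = IZR 0. Proof. by []. Qed.
Lemma oneE : (1 : R) = IZR 1. Proof. by []. Qed.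
Lemma invE (x : R) : x != 0 -> x^-1 = Rinv x.
Proof.
move=> hx; apply: (mulfI hx); rewrite mulfV // mulE Rinv_r //.
by move/eqP: hx.
Qed.
Lemma neq0E (x : R) : x != 0 <-> x <> IZR 0.
Proof. by split => [/eqP|/eqP]. Qed.

Definition Rid (x : R) : R := x.

Definition qf n (v : 'cV[R]_n) (A : 'M[R]_n) : R := (v^T *m A *m v) 0 0.

Lemma mx11E (M N : 'M[R]_1) : (M *m N) 0 0 = M 0 0 * N 0 0.
Proof. by rewrite mxE big_ord1. Qed.

Lemma tr11 n (u v : 'cV[R]_n) : (u^T *m v) 0 0 = (v^T *m u) 0 0.
Proof.
have := congr1 (fun M : 'M[R]_1 => M 0 0) (trmx_mul u^T v).
by rewrite trmxK mxE => ->.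
Qed.

Lemma qfD n v (A B : 'M[R]_n) : qf v (A + B) = qf v A + qf v B.
Proof. by rewrite /qf mulmxDr mulmxDl mxE. Qed.

Lemma qf_rank1 n v (x : 'cV[R]_n) t :
  qf v (t *: (x *m x^T)) = t * ((x^T *m v) 0 0 * (x^T *m v) 0 0).
Proof.
rewrite /qf -scalemxAr -scalemxAl mxE; congr (_ * _).
by rewrite mulmxA -(mulmxA (v^T *m x)) mx11E tr11.
Qed.

Lemma sumsq_ge0 (I : finType) (P : pred I) (f : I -> R) : Rle 0 (\sum_(i | P i) f i * f i).
Proof.
apply: (big_ind (fun x => Rle 0 x)); [exact: Rle_refl| |].
- by move=> a b ha hb; rewrite addE; lra.
- by move=> i _; rewrite mulE; nra.
Qed.

Lemma sumsq_gt0 (I : finType) (f : I -> R) i : f i <> 0 -> Rlt 0 (\sum_i f i * f i).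
Proof.
move=> hi; rewrite (bigD1 i) //= addE.
have h2 : Rle 0 (\sum_(k | k != i) f k * f k) := sumsq_ge0 _ f.
move: hi; rewrite mulE => hi.
have : Rlt 0 (f i * f i) by apply: Rsqr_pos_lt.
move=> h1; exact: Rplus_lt_le_0_compat h1 h2.
Qed.

Definition pd n (A : 'M[R]_n) := forall v : 'cV_n, v != 0 -> Rlt 0 (qf v A).

Lemma qf_scalar n (v : 'cV[R]_n) s : qf v s%:M = s * \sum_i v i 0 * v i 0.
Proof.
rewrite /qf mul_mx_scalar -scalemxAl mxE; congr (_ * _).
by rewrite mxE; apply: eq_bigr => i _; rewrite mxE.
Qed.

Lemma cV_neq0 n (v : 'cV[R]_n) : v != 0 -> exists i, v i 0 <> 0.
Proof.
move=> hv; apply/not_all_not_ex => hall; move/eqP: hv; apply.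
apply/matrixP => i j; rewrite ord1 mxE.
exact: (NNPP _ (hall i)).
Qed.

Lemma pd_scalar n s : Rlt 0 s -> pd (s%:M : 'M[R]_n).
Proof.
move=> hs v /cV_neq0 [i hi]; rewrite qf_scalar.
exact: Rmult_lt_0_compat hs (@sumsq_gt0 _ (fun k => v k 0) i hi).
Qed.

Lemma pd_rank1 n (A : 'M[R]_n) (x : 'cV[R]_n) t : pd A -> Rle 0 t -> pd (A + t *: (x *m x^T)).
Proof.
move=> hA ht v hv; rewrite qfD qf_rank1.
have h1 := hA v hv.
have h2 : Rle 0 (t * ((x^T *m v) 0 0 * (x^T *m v) 0 0)).
  apply: Rmult_le_pos => //; exact: Rle_0_sqr.
exact: Rplus_lt_le_0_compat h1 h2.
Qed.

Lemma qf0 n (A : 'M[R]_n) : qf 0 A = 0.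
Proof. by rewrite /qf trmx0 mul0mx mul0mx mxE. Qed.

Lemma pd_psd n (A : 'M[R]_n) v : pd A -> Rle 0 (qf v A).
Proof.
move=> hA; case: (eqVneq v 0) => [->|hv]; first by rewrite qf0; exact: Rle_refl.
by left; apply: hA.
Qed.

Lemma pd_unit n (A : 'M[R]_n) : pd A -> A \in unitmx.
Proof.
move=> hA; rewrite unitmxE unitfE; apply/negP => /det0P [w hw hwA].
have hv : w^T != 0 by rewrite -trmx0 (inj_eq trmx_inj).
have := hA _ hv; rewrite /qf trmxK hwA mul0mx mxE.
exact: Rlt_irrefl.
Qed.

Lemma sym_inv n (A : 'M[R]_n) : A^T = A -> (invmx A)^T = invmx A.
Proof. by move=> hA; rewrite trmx_inv hA. Qed.

Lemma pd_inv n (A : 'M[R]_n) : A^T = A -> pd A -> pd (invmx A).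
Proof.
move=> hs hA v hv.
have uA := pd_unit hA.
have hw : invmx A *m v != 0.
  apply: contra hv => /eqP h; apply/eqP.
  by rewrite -(mulKVmx uA v) h mulmx0.
have := hA _ hw; rewrite /qf trmx_mul sym_inv //.
by rewrite -!mulmxA mulKVmx.
Qed.

Lemma det_rank1_id n (u : 'cV[R]_n) (w : 'rV[R]_n) :
  \det (1%:M + u *m w) = 1 + (w *m u) 0 0.
Proof.
pose P := block_mx (1%:M + u *m w) u (0 : 'M_(1, n)) (1%:M : 'M_1).
pose Q := block_mx (1%:M : 'M_n) (0 : 'M_(n, 1)) (- w) (1%:M : 'M_1).
pose L := block_mx (1%:M : 'M_n) (0 : 'M_(n, 1)) (- w) (1%:M : 'M_1).
pose U := block_mx (1%:M : 'M_n) u (0 : 'M_(1, n)) (1%:M + w *m u : 'M_1).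
have e : P *m Q = L *m U.
  rewrite /P /Q /L /U !mulmx_block.
  rewrite !mulmx1 !mul1mx !mulmx0 !mul0mx !addr0 !add0r mulmxN mulNmx.
  by rewrite addrK addrCA addNr addr0.
have := congr1 determinant e.
rewrite !det_mulmx /P /Q /L /U !det_ublock !det_lblock.
by rewrite !det1 !mulr1 !mul1r det_mx11 mxE mxE eqxx /= mulr1n.
Qed.

Lemma det_rank1 n (A : 'M[R]_n) (x : 'cV[R]_n) t : A \in unitmx ->
  \det (A + t *: (x *m x^T)) = \det A * (1 + t * qf x (invmx A)).
Proof.
move=> uA.
have -> : A + t *: (x *m x^T) = A *m (1%:M + (invmx A *m (t *: x)) *m x^T).
  by rewrite mulmxDr mulmx1 mulmxA mulKVmx // scalemxAl.
rewrite det_mulmx det_rank1_id; congr (_ * (1 + _)).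
rewrite /qf -!scalemxAr mxE mulmxA. done.
Qed.

Lemma SM_inv n (A : 'M[R]_n) (x : 'cV[R]_n) t : A \in unitmx -> A^T = A ->
  1 + t * qf x (invmx A) != 0 ->
  invmx (A + t *: (x *m x^T)) =
  invmx A - (t / (1 + t * qf x (invmx A))) *: ((invmx A *m x) *m (invmx A *m x)^T).
Proof.
move=> uA sA hd.
set a := qf x (invmx A); set d := 1 + t * a; set s := t / d.
set u := invmx A *m x.
have hut : u^T = x^T *m invmx A by rewrite /u trmx_mul sym_inv.
have hxu : x^T *m u = a%:M by rewrite /u mulmxA [LHS]mx11_scalar.
have hAu : A *m u = x by rewrite /u mulKVmx.
have T1 : A *m (u *m u^T) = x *m u^T by rewrite mulmxA hAu.
have T2 : x *m x^T *m invmx A = x *m u^T by rewrite -mulmxA hut.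
have T3 : x *m x^T *m (u *m u^T) = a *: (x *m u^T).
  by rewrite mulmxA -(mulmxA x x^T u) hxu mul_mx_scalar scalemxAl.
have hs : t - s * t * a - s = 0.
  have e : s * d = t by rewrite /s mulrC mulrA mulrC mulrA mulVf // mul1r.
  have -> : t - s * t * a - s = t - s * d by rewrite /d; ring.
  by rewrite e subrr.
have key : (A + t *: (x *m x^T)) *m (invmx A - s *: (u *m u^T)) = 1%:M.
  rewrite mulmxDl !mulmxBr mulmxV //.
  rewrite -!scalemxAr -!scalemxAl T1 T2 T3 !scalerA.
  set M := x *m u^T.
  have h0 : t *: M - (s * t * a) *: M - s *: M = 0 by rewrite -!scalerBl hs scale0r.
  by rewrite -addrA [- _ + _]addrC h0 addr0.
have uC : (A + t *: (x *m x^T)) \in unitmx by case: (mulmx1_unit key).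
by rewrite -[RHS](mulKmx uC) key mulmx1.
Qed.

Lemma qfB n v (A B : 'M[R]_n) : qf v (A - B) = qf v A - qf v B.
Proof. by rewrite /qf mulmxBr mulmxBl !mxE. Qed.

Lemma qfZ n v (A : 'M[R]_n) c : qf v (c *: A) = c * qf v A.
Proof. by rewrite /qf -scalemxAr -scalemxAl mxE. Qed.

Lemma qf_SM n (A : 'M[R]_n) (x y : 'cV[R]_n) t : A \in unitmx -> A^T = A ->
  1 + t * qf x (invmx A) != 0 ->
  qf y (invmx (A + t *: (x *m x^T))) =
  qf y (invmx A) - t / (1 + t * qf x (invmx A)) *
     ((x^T *m invmx A *m y) 0 0 * (x^T *m invmx A *m y) 0 0).
Proof.
move=> uA sA hd; rewrite SM_inv // qfB qfZ; congr (_ - _ * _).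
rewrite /qf mulmxA -(mulmxA (y^T *m _)) mx11E tr11 trmx_mul sym_inv //.
Qed.

Lemma tr_qf n (B : 'M[R]_n) (y : 'cV[R]_n) : \tr (B *m (y *m y^T)) = qf y B.
Proof.
by rewrite mulmxA mxtrace_mulC /qf mulmxA /mxtrace big_ord1.
Qed.

Definition good n (A : 'M[R]_n) := A^T = A /\ pd A /\ Rlt 0 (\det A).

Lemma good_add n (A : 'M[R]_n) (x : 'cV[R]_n) t : good A -> Rle 0 t ->
  good (A + t *: (x *m x^T)) /\ Rle (\det A) (\det (A + t *: (x *m x^T))).
Proof.
move=> [sA [pA dA]] ht.
have uA := pd_unit pA.
have hq : Rle 0 (qf x (invmx A)) := pd_psd x (pd_inv sA pA).
have h1 : Rle 1 (1 + t * qf x (invmx A)).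
  have := Rmult_le_pos _ _ ht hq; lra.
rewrite det_rank1 //.
have hle : Rle (\det A) (\det A * (1 + t * qf x (invmx A))).
  have := Rmult_le_compat_l _ _ _ (Rlt_le _ _ dA) h1.
  by rewrite Rmult_1_r.
split; last exact: hle.
split; last split.
- by rewrite linearD /= linearZ /= trmx_mul trmxK sA.
- exact: pd_rank1.
- rewrite det_rank1 //; exact (Rlt_le_trans _ _ _ dA hle).
Qed.

Lemma good_sum n p (A : 'M[R]_n) (X : 'M[R]_(n, p)) (g : 'I_p -> R) (P : pred 'I_p) :
  good A -> (forall k, Rle 0 (g k)) ->
  good (A + \sum_(k | P k) g k *: (col k X *m (col k X)^T)) /\
  Rle (\det A) (\det (A + \sum_(k | P k) g k *: (col k X *m (col k X)^T))).
Proof.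
move=> gA hg.
apply: (big_rec (fun S => good (A + S) /\ Rle (\det A) (\det (A + S)))).
  by rewrite addr0; split => //; exact: Rle_refl.
move=> k S _ [gS hS].
rewrite addrCA addrC.
have [g' h'] := good_add (col k X) gS (hg k).
split => //; exact: Rle_trans hS h'.
Qed.

Lemma good_scalar n s : Rlt 0 s -> good (s%:M : 'M[R]_n).
Proof.
move=> hs; split; last split.
- by rewrite tr_scalar_mx.
- exact: pd_scalar.
- rewrite det_scalar; elim: n => [|m ih]; first by rewrite expr0; exact: Rlt_0_1.
  by rewrite exprS mulE; exact: Rmult_lt_0_compat.
Qed.

Definition upd p (g : 'I_p -> R) (j : 'I_p) (t : R) : 'I_p -> R :=
  fun k => if k == j then t else g k.

Section Model.
Variables (n p : nat) (y : 'cV[R]_n) (X : 'M[R]_(n, p)) (s2 : R).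

Lemma Cgamma_alt g : Cgamma s2 X g = s2%:M + \sum_(j < p) g j *: (col j X *m (col j X)^T).
Proof.
rewrite /Cgamma; congr (_ + _).
rewrite [RHS](bigID (fun j => g j != 0)) /= [X in _ = _ + X]big1 ?addr0 //.
by move=> j /negPn/eqP ->; rewrite scale0r.
Qed.

Lemma Cminus_alt g j : Cminus s2 X g j =
  s2%:M + \sum_(k | k != j) g k *: (col k X *m (col k X)^T).
Proof.
rewrite /Cminus; congr (_ + _).
rewrite [RHS](bigID (fun k => g k != 0)) /= [X in _ = _ + X]big1 ?addr0.
  by apply: eq_bigl => k; rewrite andbC.
by move=> k /andP [_ /negPn/eqP ->]; rewrite scale0r.
Qed.

Lemma C_upd g j t : Cgamma s2 X (upd g j t) =
  Cminus s2 X g j + t *: (col j X *m (col j X)^T).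
Proof.
rewrite Cgamma_alt Cminus_alt (bigD1 j) //= {1}/upd eqxx.
rewrite -[RHS]addrA; congr (_ + _); rewrite addrC; congr (_ + _).
by apply: eq_bigr => k /negbTE hk; rewrite /upd hk.
Qed.

Lemma Cminus_upd g j t : Cminus s2 X (upd g j t) j = Cminus s2 X g j.
Proof.
rewrite !Cminus_alt; congr (_ + _).
by apply: eq_bigr => k /negbTE hk; rewrite /upd hk.
Qed.

Lemma upd_id (g : 'I_p -> R) j : upd g j (g j) = g.
Proof. by apply: functional_extensionality => k; rewrite /upd; case: eqP => [->|]. Qed.

End Model.

Section Model2.
Variables (n p : nat) (y : 'cV[R]_n) (X : 'M[R]_(n, p)) (s2 : R).
Hypothesis hs2 : Rlt 0 s2.

Lemma good_Cminus g j : in_Theta g -> good (Cminus s2 X g j).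
Proof. by move=> hg; rewrite Cminus_alt; case: (good_sum X (fun k => k != j) (good_scalar n hs2) hg). Qed.

Lemma good_Cgamma g : in_Theta g -> good (Cgamma s2 X g).
Proof. by move=> hg; rewrite Cgamma_alt; case: (good_sum X predT (good_scalar n hs2) hg). Qed.

Lemma qx_ge0 g j : in_Theta g -> Rle 0 (qx X s2 g j).
Proof. by move=> hg; case: (good_Cminus j hg) => [sA [pA _]]; exact: (pd_psd _ (pd_inv sA pA)). Qed.

Lemma loglik_upd g j t : in_Theta g -> Rle 0 t ->
  loglik y X s2 (upd g j t) = Rid (
  - (1 / 2) * ln (\det (Cminus s2 X g j) * (1 + t * qx X s2 g j))
  - (1 / 2) * (qf y (invmx (Cminus s2 X g j)) -
               t * / (1 + t * qx X s2 g j) * (qy y X s2 g j * qy y X s2 g j))).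
Proof.
move=> hg ht; have [sA [pA dA]] := good_Cminus j hg.
have uA := pd_unit pA.
have hd : 1 + t * qx X s2 g j != 0.
  apply/eqP => e; have := Rmult_le_pos _ _ ht (qx_ge0 j hg).
  change (Rplus 1 (Rmult t (qx X s2 g j)) = IZR 0) in e; lra.
rewrite /loglik C_upd det_rank1 // tr_qf qf_SM // invE //.
Qed.

Lemma upd_Theta (g : 'I_p -> R) j t : in_Theta g -> Rle 0 t -> in_Theta (upd g j t).
Proof. by move=> hg ht k; rewrite /upd; case: eqP. Qed.

Lemma argmax_fix g : is_argmax y X s2 g -> (forall j, col j X <> 0) -> forall j,
  g j = (if Rlt_dec (qx X s2 g j) (qy y X s2 g j ^+ 2)
         then (qy y X s2 g j ^+ 2 - qx X s2 g j) / (qx X s2 g j ^+ 2)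
         else 0).
Proof.
move=> [hg hmax] hX j.
have [sA [pA dA]] := good_Cminus j hg.
have ha : Rlt 0 (qx X s2 g j).
  by apply: (pd_inv sA pA); apply/eqP; exact: hX.
have hh : Rlt 0 (1 / 2) by lra.
have H : forall t, Rle 0 t ->
  Rle (- (1/2) * ln (\det (Cminus s2 X g j) * (1 + t * qx X s2 g j))
       - (1/2) * (qf y (invmx (Cminus s2 X g j)) - t * / (1 + t * qx X s2 g j) * (qy y X s2 g j * qy y X s2 g j)))
      (- (1/2) * ln (\det (Cminus s2 X g j) * (1 + g j * qx X s2 g j))
       - (1/2) * (qf y (invmx (Cminus s2 X g j)) - g j * / (1 + g j * qx X s2 g j) * (qy y X s2 g j * qy y X s2 g j))).
  move=> t ht.
  have := hmax (upd g j t) (upd_Theta j hg ht).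
  have -> : loglik y X s2 g = loglik y X s2 (upd g j (g j)) by rewrite upd_id.
  by rewrite !loglik_upd.
have := one_dim _ _ _ _ _ _ hh dA ha (hg j) H.
have hq : qx X s2 g j ^+ 2 != 0.
  rewrite expr2; apply/eqP => e; have := Rmult_lt_0_compat _ _ ha ha.
  change (Rmult (qx X s2 g j) (qx X s2 g j) = IZR 0) in e; lra.
by rewrite invE // expr2.
Qed.

End Model2.

From Stdlib Require Import Lia ClassicalEpsilon.
From Coquelicot Require Import Coquelicot.
From mathcomp Require Import all_boot all_order all_algebra.
Import GRing.Theory.
Set Implicit Arguments.
Unset Strict Implicit.
Local Open Scope ring_scope.

Lemma lim_add (u v : nat -> R) (a b : R) :
  is_lim_seq u a -> is_lim_seq v b -> is_lim_seq (fun m => u m + v m) (a + b).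
Proof. move=> hu hv; exact: (is_lim_seq_plus' _ _ _ _ hu hv). Qed.

Lemma lim_mul (u v : nat -> R) (a b : R) :
  is_lim_seq u a -> is_lim_seq v b -> is_lim_seq (fun m => u m * v m) (a * b).
Proof. move=> hu hv; exact: (is_lim_seq_mult' _ _ _ _ hu hv). Qed.

Lemma lim_cst (a : R) : is_lim_seq (fun _ => a) a.
Proof. exact: is_lim_seq_const. Qed.

Lemma lim_sum (I : eqType) (r : seq I) (P : pred I) (F : nat -> I -> R) (L : I -> R) :
  (forall i, is_lim_seq (fun m => F m i) (L i)) ->
  is_lim_seq (fun m => \sum_(i <- r | P i) F m i) (\sum_(i <- r | P i) L i).
Proof.
move=> hF; elim: r => [|i r ih].
  rewrite big_nil; apply: (is_lim_seq_ext (fun _ => 0)); last exact: lim_cst.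
  by move=> m; rewrite big_nil.
rewrite big_cons; case hP: (P i).
  apply: (is_lim_seq_ext (fun m => F m i + \sum_(j <- r | P j) F m j)).
    by move=> m; rewrite big_cons hP.
  by apply: lim_add.
apply: (is_lim_seq_ext (fun m => \sum_(j <- r | P j) F m j)) => //.
by move=> m; rewrite big_cons hP.
Qed.

Lemma lim_prod (I : eqType) (r : seq I) (P : pred I) (F : nat -> I -> R) (L : I -> R) :
  (forall i, is_lim_seq (fun m => F m i) (L i)) ->
  is_lim_seq (fun m => \prod_(i <- r | P i) F m i) (\prod_(i <- r | P i) L i).
Proof.
move=> hF; elim: r => [|i r ih].
  rewrite big_nil; apply: (is_lim_seq_ext (fun _ => 1)); last exact: lim_cst.
  by move=> m; rewrite big_nil.
rewrite big_cons; case hP: (P i).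
  apply: (is_lim_seq_ext (fun m => F m i * \prod_(j <- r | P j) F m j)).
    by move=> m; rewrite big_cons hP.
  by apply: lim_mul.
apply: (is_lim_seq_ext (fun m => \prod_(j <- r | P j) F m j)) => //.
by move=> m; rewrite big_cons hP.
Qed.

Lemma lim_det k (M : nat -> 'M[R]_k) (L : 'M[R]_k) :
  (forall i j, is_lim_seq (fun m => M m i j) (L i j)) ->
  is_lim_seq (fun m => \det (M m)) (\det L).
Proof.
move=> hM; rewrite /determinant.
apply: lim_sum => s; apply: lim_mul; first exact: lim_cst.
by apply: lim_prod => i; apply: hM.
Qed.

Section Cont.
Variables (n p : nat) (y : 'cV[R]_n) (X : 'M[R]_(n, p)) (s2 : R).
Hypothesis hs2 : Rlt 0 s2.

Lemma C_entry (g : 'I_p -> R) a b : Cgamma s2 X g a b =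
  (s2%:M : 'M[R]_n) a b + \sum_j g j * (col j X *m (col j X)^T) a b.
Proof.
rewrite Cgamma_alt mxE summxE; congr (_ + _); apply: eq_bigr => j _.
by rewrite mxE.
Qed.

Lemma lim_C (G : nat -> 'I_p -> R) (L : 'I_p -> R) :
  (forall j, is_lim_seq (fun m => G m j) (L j)) ->
  forall a b, is_lim_seq (fun m => Cgamma s2 X (G m) a b) (Cgamma s2 X L a b).
Proof.
move=> hG a b; rewrite C_entry.
apply: (is_lim_seq_ext (fun m => (s2%:M : 'M[R]_n) a b +
   \sum_j G m j * (col j X *m (col j X)^T) a b)).
  by move=> m; rewrite C_entry.
apply: lim_add; first exact: lim_cst.
by apply: lim_sum => j; apply: lim_mul => //; exact: lim_cst.
Qed.

Lemma unit_det_neq0 k (A : 'M[R]_k) : A \in unitmx -> \det A <> 0.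
Proof. by rewrite unitmxE unitfE => /eqP. Qed.

Lemma invmx_entry k (A : 'M[R]_k) a b : A \in unitmx ->
  invmx A a b = Rinv (\det A) * ((-1) ^+ (b + a) * \det (row' b (col' a A))).
Proof.
move=> uA; rewrite /invmx uA mxE invE; last by apply/eqP; exact: unit_det_neq0.
by rewrite mxE.
Qed.

Lemma lim_invmx k (M : nat -> 'M[R]_k) (L : 'M[R]_k) :
  (forall m, M m \in unitmx) -> L \in unitmx ->
  (forall i j, is_lim_seq (fun m => M m i j) (L i j)) ->
  forall a b, is_lim_seq (fun m => invmx (M m) a b) (invmx L a b).
Proof.
move=> uM uL hM a b; rewrite invmx_entry //.
apply: (is_lim_seq_ext (fun m => Rinv (\det (M m)) *
   ((-1) ^+ (b + a) * \det (row' b (col' a (M m)))))).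
  by move=> m; rewrite invmx_entry.
apply: lim_mul.
  have := is_lim_seq_inv _ _ (lim_det hM).
  by move=> /(_ _) h; apply: h; move=> [] /unit_det_neq0; apply.
apply: lim_mul; first exact: lim_cst.
by apply: lim_det => i j; rewrite mxE mxE; apply: (is_lim_seq_ext (fun m => M m (lift b i) (lift a j))) => // m; rewrite !mxE.
Qed.

Lemma tr_entry k (B : 'M[R]_k) (v : 'cV[R]_k) :
  \tr (B *m (v *m v^T)) = \sum_a \sum_b B a b * (v b 0 * v a 0).
Proof.
rewrite /mxtrace; apply: eq_bigr => a _; rewrite mxE; apply: eq_bigr => b _.
by rewrite mxE big_ord1 mxE.
Qed.

Lemma lim_loglik (G : nat -> 'I_p -> R) (L : 'I_p -> R) :
  (forall m, in_Theta (G m)) -> in_Theta L ->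
  (forall j, is_lim_seq (fun m => G m j) (L j)) ->
  is_lim_seq (fun m => loglik y X s2 (G m)) (loglik y X s2 L).
Proof.
move=> hG hL hlim.
have gG : forall m, good (Cgamma s2 X (G m)) by move=> m; apply: good_Cgamma.
have gL := good_Cgamma X hs2 hL.
have uG : forall m, Cgamma s2 X (G m) \in unitmx by move=> m; case: (gG m) => _ [/pd_unit ? _].
have uL : Cgamma s2 X L \in unitmx by case: gL => _ [/pd_unit ? _].
have hC := lim_C hlim.
apply: is_lim_seq_minus'.
  apply: is_lim_seq_mult'; first exact: is_lim_seq_const.
  apply: is_lim_seq_continuous; last exact: lim_det.
  apply/continuity_pt_filterlim; apply: continuous_ln.
  by case: gL => _ [].
apply: is_lim_seq_mult'; first exact: is_lim_seq_const.
rewrite tr_entry.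
apply: (is_lim_seq_ext (fun m => \sum_a \sum_b invmx (Cgamma s2 X (G m)) a b * (y b 0 * y a 0))).
  by move=> m; rewrite tr_entry.
apply: lim_sum => a; apply: lim_sum => b; apply: lim_mul; last exact: lim_cst.
exact: lim_invmx.
Qed.

End Cont.

Fixpoint build (pick : nat -> nat -> nat) (k : nat) : nat :=
  match k with
  | O => pick O O
  | S k' => pick (S (build pick k')) (S k')
  end.

Lemma lim_invS : is_lim_seq (fun k => Rinv (INR (S k))) (IZR 0).
Proof.
have h : is_lim_seq (fun k => INR (S k)) p_infty.
  by apply/(is_lim_seq_incr_1 INR); exact: is_lim_seq_INR.
exact: (is_lim_seq_inv _ _ h).
Qed.

Lemma BW1 (v : nat -> R) (M : R) : (forall m, Rle 0 (v m) /\ Rle (v m) M) ->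
  exists psi : nat -> nat, (forall k, (psi k < psi (S k))%coq_nat) /\
    ex_finite_lim_seq (fun k => v (psi k)).
Proof.
move=> hv.
have [l hl] := Bolzano_Weierstrass v (fun c => Rle 0 c /\ Rle c M) (compact_P3 0 M) hv.
have H : forall N k, exists q, (N <= q)%coq_nat /\ Rlt (Rabs (v q - l)) (Rinv (INR (S k))).
  move=> N k.
  have hpos : Rlt 0 (Rinv (INR (S k))) by apply: Rinv_0_lt_compat; apply: lt_0_INR; exact: Nat.lt_0_succ.
  apply: (hl (fun z => Rlt (Rabs (z - l)) (Rinv (INR (S k)))) N).
  by exists (mkposreal _ hpos) => z; rewrite /disc.
pose pick N k := proj1_sig (constructive_indefinite_description _ (H N k)).
have hpick : forall N k, (N <= pick N k)%coq_nat /\ Rlt (Rabs (v (pick N k) - l)) (Rinv (INR (S k))).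
  by move=> N k; rewrite /pick; case: constructive_indefinite_description.
exists (build pick); split.
  by move=> k /=; case: (hpick (S (build pick k)) (S k)).
exists l.
apply: (is_lim_seq_le_le (fun k => Rminus l (Rinv (INR (S k)))) _ (fun k => Rplus l (Rinv (INR (S k))))).
- move=> k; have : Rlt (Rabs (v (build pick k) - l)) (Rinv (INR (S k))).
    by case: k => [|k] /=; exact: (proj2 (hpick _ _)).
  move/Rabs_def2 => [h1 h2]. split; lra.
- have := is_lim_seq_minus' _ _ _ _ (is_lim_seq_const l) lim_invS.
  by rewrite Rminus_0_r.
- have := is_lim_seq_plus' _ _ _ _ (is_lim_seq_const l) lim_invS.
  by rewrite Rplus_0_r.
Qed.

Lemma incr_mono (phi : nat -> nat) : (forall k, (phi k < phi (S k))%coq_nat) ->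
  forall a b, (a < b)%coq_nat -> (phi a < phi b)%coq_nat.
Proof.
move=> h a b; elim: b => [|b ih] hab; first lia.
have [e|lt] : a = b \/ (a < b)%coq_nat by lia.
  by rewrite e; apply: h.
have := h b; have := ih lt; lia.
Qed.

Lemma BWp p (u : nat -> 'I_p -> R) (M : 'I_p -> R) :
  (forall m j, Rle 0 (u m j) /\ Rle (u m j) (M j)) ->
  exists phi : nat -> nat, (forall k, (phi k < phi (S k))%coq_nat) /\
    forall j, ex_finite_lim_seq (fun k => u (phi k) j).
Proof.
move=> hu.
suff H : forall s : seq 'I_p, exists phi : nat -> nat, (forall k, (phi k < phi (S k))%coq_nat) /\
    forall j, j \in s -> ex_finite_lim_seq (fun k => u (phi k) j).
  have [phi [h1 h2]] := H (enum 'I_p).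
  by exists phi; split => // j; apply: h2; rewrite mem_enum.
elim => [|j s [phi [hinc hs]]].
  by exists (fun k => k); split => // k; lia.
have [psi [hpsi [l hl]]] := BW1 (fun m => hu (phi m) j).
exists (fun k => phi (psi k)); split.
  by move=> k; apply: incr_mono => //; apply: hpsi.
move=> j'; rewrite in_cons => /orP [/eqP ->|hj'].
  by exists l.
have [l' hl'] := hs j' hj'.
exists l'; apply: (is_lim_seq_subseq (fun k => u (phi k) j')) => //.
exact: eventually_subseq.
Qed.

Section Exist.
Variables (n p : nat) (y : 'cV[R]_n) (X : 'M[R]_(n, p)) (s2 : R).
Hypothesis hs2 : Rlt 0 s2.
Hypothesis hX : forall j : 'I_p, col j X <> 0.

Let D0 := \det (s2%:M : 'M[R]_n).
Let q j := qf (col j X) (invmx (s2%:M : 'M[R]_n)).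

Lemma D0_pos : Rlt 0 D0.
Proof. by case: (good_scalar n hs2) => _ []. Qed.

Lemma q_pos j : Rlt 0 (q j).
Proof.
case: (good_scalar n hs2) => sA [pA _].
by apply: (pd_inv sA pA); apply/eqP; exact: hX.
Qed.

Lemma ll_le_lndet g : in_Theta g ->
  Rle (loglik y X s2 g) (- (1/2) * ln (\det (Cgamma s2 X g))).
Proof.
move=> hg; have [sC [pC dC]] := good_Cgamma X hs2 hg.
have hq := pd_psd y (pd_inv sC pC).
rewrite /loglik tr_qf; lra.
Qed.

Lemma det_ge_D0 g : in_Theta g -> Rle D0 (\det (Cgamma s2 X g)).
Proof.
move=> hg; rewrite Cgamma_alt.
by case: (good_sum X predT (good_scalar n hs2) hg).
Qed.

Lemma det_ge_j g j : in_Theta g ->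
  Rle (D0 * (1 + g j * q j)) (\det (Cgamma s2 X g)).
Proof.
move=> hg; rewrite Cgamma_alt (bigD1 j) //= addrA.
have gs := good_scalar n hs2.
have [gA _] := good_add (col j X) gs (hg j).
have [_ h] := good_sum X (fun k => k != j) gA hg.
have e : \det (s2%:M + g j *: (col j X *m (col j X)^T)) = D0 * (1 + g j * q j).
  by rewrite det_rank1 //; case: gs => _ [/pd_unit ? _].
by rewrite e in h.
Qed.

Let l0 := loglik y X s2 (fun _ => 0).

Lemma Theta0 : in_Theta (fun _ : 'I_p => 0 : R).
Proof. by move=> j; exact: Rle_refl. Qed.

Lemma bound_g g j : in_Theta g -> Rle l0 (loglik y X s2 g) ->
  Rle (g j) (exp (-2 * l0) * / (D0 * q j)).
Proof.
move=> hg hl.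
have h1 := ll_le_lndet hg.
have hD := D0_pos; have hq := q_pos j; have hgj := hg j.
have hgq : Rle 0 (g j * q j) by apply: Rmult_le_pos => //; left.
have hpos : Rlt 0 (D0 * (1 + g j * q j)) by apply: Rmult_lt_0_compat => //; lra.
have h2 := ln_le _ _ hpos (det_ge_j j hg).
have h3 : Rle (D0 * (1 + g j * q j)) (exp (-2 * l0)).
  apply: Rnot_lt_le => hlt.
  have := ln_increasing _ _ (exp_pos _) hlt; rewrite ln_exp; lra.
have h4 : Rle (g j * (D0 * q j)) (exp (-2 * l0)) by nra.
have hDq : Rlt 0 (D0 * q j) by apply: Rmult_lt_0_compat.
have -> : g j = Rid (g j * (D0 * q j) * / (D0 * q j)).
  by rewrite /Rid Rmult_assoc Rinv_r ?Rmult_1_r //; apply: Rgt_not_eq.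
rewrite /Rid.
apply: Rmult_le_compat_r => //; left; exact: Rinv_0_lt_compat.
Qed.

Lemma exists_argmax : exists g, is_argmax y X s2 g.
Proof.
pose E r := exists g, in_Theta g /\ r = loglik y X s2 g.
have hb : bound E.
  exists (Rid (- (1/2) * ln D0)) => r [g [hg ->]]; rewrite /Rid.
  have := ll_le_lndet hg; have := ln_le _ _ D0_pos (det_ge_D0 hg); lra.
have hne : exists r, E r by exists l0; exists (fun _ => 0); split => //; exact: Theta0.
have [Sup [hSub hSl]] := completeness E hb hne.
have H : forall m : nat, exists g, in_Theta g /\
    Rlt (Sup - / INR (S m)) (loglik y X s2 g) /\ Rle l0 (loglik y X s2 g).
  move=> m.
  have heps : Rlt 0 (/ INR (S m)) by apply: Rinv_0_lt_compat; apply: lt_0_INR; lia.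
  have [g [hg hgt]] : exists g, in_Theta g /\ Rlt (Sup - / INR (S m)) (loglik y X s2 g).
    apply: NNPP => hno.
    have hub : is_upper_bound E (Sup - / INR (S m)).
      move=> r [g [hg ->]]; apply: Rnot_lt_le => hlt; apply: hno; by exists g.
    have := hSl _ hub; lra.
  case: (Rle_lt_dec l0 (loglik y X s2 g)) => hl; first by exists g.
  exists (fun _ => 0); split; first exact: Theta0.
  rewrite /l0 in hl *; split; [lra | exact: Rle_refl].
pose G m := proj1_sig (constructive_indefinite_description _ (H m)).
have hG : forall m, in_Theta (G m) /\
    Rlt (Sup - / INR (S m)) (loglik y X s2 (G m)) /\ Rle l0 (loglik y X s2 (G m)).
  by move=> m; rewrite /G; case: constructive_indefinite_description.
have hbd : forall m j, Rle 0 (G m j) /\ Rle (G m j) (exp (-2 * l0) * / (D0 * q j)).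
  move=> m j; have [h1 [_ h3]] := hG m; split; first exact: h1.
  exact: bound_g.
have [phi [hphi hlim]] := BWp hbd.
pose L j := real (Lim_seq (fun k => G (phi k) j)).
have hL : forall j, is_lim_seq (fun k => G (phi k) j) (L j).
  by move=> j; exact: Lim_seq_correct' (hlim j).
have thL : in_Theta L.
  move=> j; have := is_lim_seq_le (fun _ => 0) _ _ _ (fun k => proj1 (hG (phi k)) j)
     (is_lim_seq_const 0) (hL j).
  by [].
have hc := lim_loglik (y := y) hs2 (fun k => proj1 (hG (phi k))) thL hL.
exists L; split => // g' hg'.
have hv : is_lim_seq (fun k => Rplus (loglik y X s2 (G (phi k))) (/ INR (S (phi k))))
            (Rplus (loglik y X s2 L) 0).
  apply: (is_lim_seq_plus' (fun k => loglik y X s2 (G (phi k))) _ (loglik y X s2 L)); first exact: hc.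
  apply: (is_lim_seq_subseq (fun k => / INR (S k))); first exact: eventually_subseq.
  exact: lim_invS.
have := is_lim_seq_le (fun _ => loglik y X s2 g') _ _ _ _ (is_lim_seq_const _) hv.
rewrite Rplus_0_r; apply.
move=> k; have := hSub _ (ex_intro _ g' (conj hg' erefl)).
have [_ [h2 _]] := hG (phi k); lra.
Qed.

End Exist.

Unset Implicit Arguments.

Theorem proposition1 (n p : nat) (y : 'cV[R]_n) (X : 'M[R]_(n, p)) (s2 : R)
  (hs2 : Rlt 0 s2) (hX : forall j : 'I_p, col j X <> 0%R) :
  exists g : 'I_p -> R,
    is_argmax y X s2 g /\
    forall j : 'I_p,
      g j = (if Rlt_dec (qx X s2 g j) (qy y X s2 g j ^+ 2)
             then (qy y X s2 g j ^+ 2 - qx X s2 g j) / (qx X s2 g j ^+ 2)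
             else 0).
Proof.
have [g hg] := exists_argmax y hs2 hX.
exists g; split => //.
exact: (argmax_fix hs2 hg hX).
Qed.
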